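(* Let $n\ge 5$. Then the metric dimension of $L(n)$ is $n-2$.
   Context: For $n\ge 5$, $H(n)$ is the graph with vertex set $V_1\cup V_2$, where $V_1=\{v_1,\dots,v_n\}$ and $V_2=\{v_iv_j: 1\le i<j\le n\}$, and $v_r$ is adjacent to $v_iv_j$ iff $r\in\{i,j\}$ (no other edges). $L(n)$ is the line graph of $H(n)$: its vertices are the edges of $H(n)$, two being adjacent iff they share an endpoint. $d$ is the shortest-path distance; a set $Q$ of vertices is a resolving set of $G$ if any two distinct vertices $x,y$ satisfy $(d(x,q))_{q\in Q}\neq(d(y,q))_{q\in Q}$; the metric dimension is the minimum size of a resolving set. *)

(* Defs.v *)
From mathcomp Require Import all_boot.
Set Implicit Arguments. Unset Strict Implicit. Unset Printing Implicit Defensive.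

Fixpoint ball (T : finType) (e : rel T) (k : nat) (x : T) : {set T} :=
  if k is k'.+1 then
    ball e k' x :|: [set y | [exists z in ball e k' x, e z y]]
  else [set x].

(* shortest-path distance: least k with y within k steps of x.
   (Convention: #|T| if y is unreachable; irrelevant for connected graphs.) *)
Definition dist (T : finType) (e : rel T) (x y : T) : nat :=
  find (fun k => y \in ball e k x) (iota 0 #|T|).

Definition resolving (T : finType) (e : rel T) (Q : {set T}) : bool :=
  [forall x, forall y, (x != y) ==> [exists q in Q, dist e x q != dist e y q]].

(* metric dimension: minimum size of a resolving set (setT is always resolving) *)
Definition metric_dim (T : finType) (e : rel T) : nat :=
  \big[minn/#|T|]_(Q : {set T} | resolving e Q) #|Q|.

Definition is_edge (T : finType) (e : rel T) (E : {set T}) : bool :=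
  [exists x, exists y, [&& x != y, e x y & E == [set x; y]]].

Definition line_vert (T : finType) (e : rel T) := {E : {set T} | is_edge e E}.

Definition line_rel (T : finType) (e : rel T) : rel (line_vert e) :=
  fun E F => (E != F) && (val E :&: val F != set0).

(* V1 = 'I_n (vertex v_r), V2 = 2-subsets {i,j} of 'I_n (vertex v_i v_j) *)
Definition pair_set (n : nat) := {A : {set 'I_n} | #|A| == 2}.

Definition Hvert (n : nat) : finType := ('I_n + pair_set n)%type.

Definition Hrel (n : nat) : rel (Hvert n) :=
  fun u v =>
    match u, v with
    | inl r, inr A => r \in val A
    | inr A, inl r => r \in val A
    | _, _ => false
    end.

Definition Lvert (n : nat) : finType := line_vert (@Hrel n).
Definition Lrel (n : nat) : rel (Lvert n) := @line_rel _ (@Hrel n).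

(* Main.v *)
Require Import Defs.
From mathcomp Require Import all_boot.
From mathcomp Require Import zify.
Set Warnings "-notation-overridden".
Set Implicit Arguments. Unset Strict Implicit. Unset Printing Implicit Defensive.

Definition g (r s a b : nat) : nat :=
  if (r == a) && (s == b) then 0 else if (r == a) || ((r == b) && (s == a)) then 1
  else if (r == b) || (s == a) then 2 else 3.
Lemma gspec r s a b :
  (g r s a b = 0 /\ r = a /\ s = b) \/
  (g r s a b = 1 /\ (r <> a \/ s <> b) /\ (r = a \/ (r = b /\ s = a))) \/
  (g r s a b = 2 /\ r <> a /\ (r <> b \/ s <> a) /\ (r = b \/ s = a)) \/
  (g r s a b = 3 /\ r <> a /\ r <> b /\ s <> a).
Proof.
rewrite /g; case: (r =P a) => ?; case: (s =P b) => ?; case: (r =P b) => ?; case: (s =P a) => ? /=; try lia.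
Qed.
Ltac gsp := repeat match goal with H : _ \/ _ |- _ => destruct H | H : _ /\ _ |- _ => destruct H end.
Ltac gfin := repeat match goal with H : g ?x ?y ?z ?w = _ |- context[g ?x ?y ?z ?w] => rewrite H end;
   (done || (exfalso; congruence)).
Lemma gtri u v c d a b : u <> v -> c <> d -> a <> b -> g c d a b = 1 -> g u v a b <= g u v c d + 1.
Proof.
move=> ? ? ? ?; have := gspec u v a b; have := gspec u v c d; have := gspec c d a b; intros; gsp; gfin.
Qed.
Lemma gpred r s a b : r <> s -> a <> b -> 0 < g r s a b -> exists c d, c <> d /\ (c = r \/ c = a) /\
  (d = r \/ d = s \/ d = a) /\ g r s c d + 1 = g r s a b /\ g c d a b = 1.
Proof.
move=> rs ab hp.
have := gspec r s a b; case=> [[h0 _]|[[h1 _]|[[h2 [? [_ [hb|hb]]]]|[h3 ?]]]]; first lia.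
- exists r, s; have -> : g r s r s = 0 by rewrite /g !eqxx.
  rewrite h1; repeat split; auto.
- exists r, a; have := gspec r s r a; have := gspec r a a b; intros; gsp; repeat split; try lia; gfin.
- exists a, r; have := gspec r s a r; have := gspec a r a b; intros; gsp; repeat split; try lia; gfin.
- exists a, r; have := gspec r s a r; have := gspec a r a b; intros; gsp; repeat split; try lia; gfin.
Qed.
Lemma g_le3 r s a b : g r s a b <= 3.
Proof. rewrite /g; repeat case: ifP => //. Qed.

Lemma third u v : exists a, a < 3 /\ a <> u /\ a <> v.
Proof.
case: (u =P 0) => h0; case: (v =P 0) => h0'.
- exists 1; lia.
- case: (v =P 1) => h1; [exists 2 | exists 1]; lia.
- case: (u =P 1) => h1; [exists 2 | exists 1]; lia.
- exists 0; lia.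
Qed.

Section Key.
Variable N : nat.
Hypothesis HN : 5 <= N.
Variables r s r' s' : nat.
Hypotheses (hr : r < N) (hs : s < N) (hr' : r' < N) (hs' : s' < N) (rs : r <> s) (rs' : r' <> s').

Lemma keyA : r < N - 2 -> (forall a, a < N - 2 -> g r s a (N-1) = g r' s' a (N-1)) -> r = r' /\ s = s'.
Proof.
move=> hrp H.
have [E1|[E2 E3]] : r' = r \/ (r' = N - 1 /\ s' = r).
  have := H r hrp; have := gspec r s r (N-1); have := gspec r' s' r (N-1); intros; gsp; lia.
- subst r'; split => //.
  case: (ltnP s (N-2)) => hsp.
    have := H s hsp; have := gspec r s s (N-1); have := gspec r s' s (N-1); intros; gsp; lia.
  case: (ltnP s' (N-2)) => hsp'.
    have := H s' hsp'; have := gspec r s s' (N-1); have := gspec r s' s' (N-1); intros; gsp; lia.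
  have := H r hrp; have := gspec r s r (N-1); have := gspec r s' r (N-1); intros; gsp; lia.
- have [a [ha [ar as_]]] := third r s.
  have := H a ltac:(lia); have := gspec r s a (N-1); have := gspec r' s' a (N-1); intros; gsp; lia.
Qed.
End Key.

Lemma keyres N r s r' s' : 5 <= N -> r < N -> s < N -> r' < N -> s' < N -> r <> s -> r' <> s' ->
  (forall a, a < N - 2 -> g r s a (N-1) = g r' s' a (N-1)) -> r = r' /\ s = s'.
Proof.
move=> HN hr hs hr' hs' rs rs' H.
case: (ltnP r (N-2)) => hrp. { exact: (keyA HN hr hs hr' hs' rs rs' hrp H). }
case: (ltnP r' (N-2)) => hrp'.
  have [] := keyA HN hr' hs' hr hs rs' rs hrp' (fun a ha => esym (H a ha)); split; congruence.
case: (r =P r') => e.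
- subst r'; split => //.
  case: (ltnP s (N-2)) => hsp.
    have := H s hsp; have := gspec r s s (N-1); have := gspec r s' s (N-1); intros; gsp; lia.
  case: (ltnP s' (N-2)) => hsp'.
    have := H s' hsp'; have := gspec r s s' (N-1); have := gspec r s' s' (N-1); intros; gsp; lia.
  lia.
- have [a [ha [ar as_]]] := third s s'.
  have := H a ltac:(lia); have := gspec r s a (N-1); have := gspec r' s' a (N-1); intros; gsp; lia.
Qed.
Unset Implicit Arguments.


Lemma find_leq D M : D < M -> find (fun k => D <= k) (iota 0 M) = D.
Proof.
move=> h. have -> : M = D + (M - D - 1).+1 by lia.
rewrite iotaD find_cat size_iota /=.
have -> : has (fun k => D <= k) (iota 0 D) = false.
  apply/hasPn => k; rewrite mem_iota /=; lia.
by rewrite leqnn addn0.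
Qed.

Lemma bigmin_le (I : eqType) (s : seq I) (F : I -> nat) d x :
  x \in s -> \big[minn/d]_(i <- s) F i <= F x.
Proof.
elim: s => //= y s IH; rewrite inE big_cons => /orP [/eqP ->|h]; first exact: geq_minl.
exact: leq_trans (geq_minr _ _) (IH h).
Qed.

Section Gen.
Variables (T : finType) (e : rel T) (R S : T -> nat) (N : nat).
Hypothesis HN : 5 <= N.
Hypothesis HR : forall x, R x < N.
Hypothesis HS : forall x, S x < N.
Hypothesis HRS : forall x, R x <> S x.
Hypothesis Hsurj : forall r s, r < N -> s < N -> r <> s -> exists x, R x = r /\ S x = s.
Hypothesis Hinj : forall x y, R x = R y -> S x = S y -> x = y.
Hypothesis He : forall x y, e x y = (g (R x) (S x) (R y) (S y) == 1).
Let d x y := g (R x) (S x) (R y) (S y).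

Lemma ballP k x y : (y \in ball e k x) = (d x y <= k).
Proof.
elim: k y => [|k IH] y /=.
- rewrite in_set1; apply/eqP/idP => [->|].
    by rewrite /d /g !eqxx.
  rewrite leqn0 => /eqP; rewrite /d => h.
  have := gspec (R x) (S x) (R y) (S y); intros; gsp; try lia.
  by apply: Hinj.
- rewrite in_setU in_set IH; apply/idP/idP.
  + case/orP => [h|/existsP [z /andP [hz ez]]]; first lia.
    rewrite IH in hz; rewrite He in ez.
    have := gtri (HRS x) (HRS z) (HRS y) (eqP ez); rewrite /d in hz *; lia.
  + move=> h; case: (leqP (d x y) k) => [h3|h2]; first by apply/orP; left.
    have dy : d x y = k.+1 by lia.
    apply/orP; right; apply/existsP.
    have [c [d' [cd [hc [hd [h1 h2']]]]]] := gpred (HRS x) (HRS y) (ltac:(rewrite /d in dy; lia) : 0 < d x y).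
    have [z [Rz Sz]] : exists z, R z = c /\ S z = d'.
      apply: Hsurj => //.
      - by case: hc => ->.
      - by case: hd => [->|[->|->]].
    exists z; rewrite IH He /d Rz Sz h2' eqxx andbT.
    rewrite /d in dy; lia.
Qed.

Lemma card_gt3 : 3 < #|T|.
Proof.
have [x1 [R1 S1]] := Hsurj 0 1 (ltac:(lia)) (ltac:(lia)) (ltac:(lia)).
have [x2 [R2 S2]] := Hsurj 0 2 (ltac:(lia)) (ltac:(lia)) (ltac:(lia)).
have [x3 [R3 S3]] := Hsurj 0 3 (ltac:(lia)) (ltac:(lia)) (ltac:(lia)).
have [x4 [R4 S4]] := Hsurj 0 4 (ltac:(lia)) (ltac:(lia)) (ltac:(lia)).
have u : uniq [:: x1; x2; x3; x4].
  rewrite /= !inE !negb_or !andbT.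
  repeat (apply/andP; split); apply/eqP => E; move: (congr1 S E); lia.
have := card_uniqP u; move=> /= <-.
exact: max_card.
Qed.

Lemma distE x y : dist e x y = d x y.
Proof.
rewrite /dist (eq_find (fun k => ballP k x y)) find_leq //.
have := g_le3 (R x) (S x) (R y) (S y); have := card_gt3; rewrite /d; lia.
Qed.

Lemma resolvingP Q : resolving e Q -> forall x y, x != y -> exists2 q, q \in Q & d x q != d y q.
Proof.
move=> /forallP h x y xy; have /forallP/(_ y)/implyP/(_ xy)/existsP [q /andP [qQ hq]] := h x.
by exists q; rewrite -?distE.
Qed.

Lemma lower Q : resolving e Q -> N - 2 <= #|Q|.
Proof.
move=> /resolvingP hres; rewrite leqNgt; apply/negP => hlt.
pose t q := if R q == 0 then S q else R q.
pose L := map t (enum Q). pose I := iota 1 (N - 1).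
have h1 : size (filter (mem L) I) <= size L.
  apply: uniq_leq_size; first by rewrite filter_uniq // iota_uniq.
  by move=> z; rewrite mem_filter => /andP [].
have h2 : size L = #|Q| by rewrite size_map cardE.
have h3 := count_predC (mem L) I.
rewrite -!size_filter size_iota in h3.
have : 2 <= size (filter (predC (mem L)) I) by lia.
have : uniq (filter (predC (mem L)) I) by rewrite filter_uniq // iota_uniq.
have hm : forall z, z \in filter (predC (mem L)) I -> z \notin L /\ 1 <= z < N.
  move=> z; rewrite mem_filter mem_iota => /andP [/= ? ?]; split => //; lia.
case: (filter _ _) hm => [|s1 [|s2 K]] //= hm /andP [hs _] _.
have [n1 b1] := hm s1 (mem_head _ _).
have [n2 b2] : s2 \notin L /\ 1 <= s2 < N by apply: hm; rewrite !inE eqxx orbT.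
rewrite inE negb_or in hs; case/andP: hs => /eqP s12 _.
have [x1 [R1 S1]] := Hsurj 0 s1 (ltac:(lia)) (ltac:(lia)) (ltac:(lia)).
have [x2 [R2 S2]] := Hsurj 0 s2 (ltac:(lia)) (ltac:(lia)) (ltac:(lia)).
have x12 : x1 != x2 by apply/eqP => E; move: (congr1 S E); lia.
have [q qQ] := hres _ _ x12; apply/negP; rewrite negbK.
have tL : t q \in L by rewrite map_f // mem_enum.
have t1 : s1 <> t q by move=> E; by rewrite E tL in n1.
have t2 : s2 <> t q by move=> E; by rewrite E tL in n2.
apply/eqP; rewrite /d R1 R2 S1 S2; move: t1 t2; rewrite /t.
have := HRS q; have := HR q; have := HS q.
case: (R q =P 0) => hq0 *.
- have := gspec 0 s1 (R q) (S q); have := gspec 0 s2 (R q) (S q); intros; gsp; gfin || lia.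
- have := gspec 0 s1 (R q) (S q); have := gspec 0 s2 (R q) (S q); intros; gsp; gfin || lia.
Qed.

Definition Q0 := [set q | (R q < N - 2) && (S q == N - 1)].

Lemma card_Q0 : #|Q0| = N - 2.
Proof.
rewrite cardE -(size_map R) -(size_iota 0 (N - 2)).
apply: perm_size; apply: uniq_perm.
- rewrite map_inj_in_uniq ?enum_uniq // => x y; rewrite !mem_enum !inE => /andP [_ /eqP h1] /andP [_ /eqP h2] E.
  by apply: Hinj; congruence.
- exact: iota_uniq.
- move=> i; rewrite mem_iota /=; apply/mapP/idP.
  + by case=> x; rewrite mem_enum inE => /andP [h _] ->.
  + move=> hi; have [x [Rx Sx]] := Hsurj i (N - 1) (ltac:(lia)) (ltac:(lia)) (ltac:(lia)).
    exists x => //; rewrite mem_enum inE Rx Sx eqxx; lia.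
Qed.

Lemma Q0_res : resolving e Q0.
Proof.
apply/forallP => x; apply/forallP => y; apply/implyP => xy.
case: (boolP [exists q in Q0, dist e x q != dist e y q]) => // /existsPn H.
exfalso; move/eqP: xy; apply.
have := @keyres N (R x) (S x) (R y) (S y) HN (HR x) (HS x) (HR y) (HS y) (HRS x) (HRS y).
case.
  move=> a ha.
  have [q [Rq Sq]] := Hsurj a (N - 1) (ltac:(lia)) (ltac:(lia)) (ltac:(lia)).
  have := H q; rewrite inE Rq Sq eqxx ha /= negbK !distE /d Rq Sq => /eqP //.
move=> h1 h2; exact: Hinj.
Qed.

Theorem metric_dim_gen : metric_dim e = N - 2.
Proof.
apply/eqP; rewrite eqn_leq; apply/andP; split.
- rewrite /metric_dim -big_filter -card_Q0; apply: bigmin_le.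
  by rewrite mem_filter Q0_res mem_index_enum.
- rewrite /metric_dim; apply: (big_ind (fun v => N - 2 <= v)).
  + by rewrite -card_Q0 max_card.
  + by move=> a b ha hb; rewrite leq_min ha hb.
  + by move=> Q; apply: lower.
Qed.
End Gen.

Section Spec.
Variable n : nat.
Implicit Types E F : Lvert n.

Definition vL (r : 'I_n) (A : pair_set n) : {set Hvert n} := [set (inl r : Hvert n); inr A].

Lemma edgeP E : exists (r : 'I_n) (A : pair_set n), r \in val A /\ val E = vL r A.
Proof.
case: E => /= X /existsP [x /existsP [y /and3P [xy exy /eqP ->]]].
case: x y xy exy => [r|A] [s|B] //= _ h.
- by exists r, B.
- by exists s, A; split => //; rewrite /vL setUC.
Qed.

Lemma ex_lr E : exists r : 'I_n, (inl r : Hvert n) \in val E.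
Proof. by have [r [A [_ ->]]] := edgeP E; exists r; rewrite !inE eqxx. Qed.
Lemma ex_lA E : exists A : pair_set n, (inr A : Hvert n) \in val E.
Proof. by have [r [A [_ ->]]] := edgeP E; exists A; rewrite !inE eqxx orbT. Qed.

Definition lr E := xchoose (ex_lr E).
Definition lA E := xchoose (ex_lA E).

Lemma LE E : lr E \in val (lA E) /\ val E = vL (lr E) (lA E).
Proof.
have [r [A [rA eE]]] := edgeP E.
have h1 : (inl (lr E) : Hvert n) \in val E := xchooseP (ex_lr E).
have h2 : (inr (lA E) : Hvert n) \in val E := xchooseP (ex_lA E).
rewrite eE !inE /= in h1 h2.
have -> : lr E = r by case/orP: h1 => /eqP // [].
have -> : lA E = A by move/eqP: h2 => [].
by [].
Qed.

Definition oth E : 'I_n := odflt (lr E) [pick s in val (lA E) | s != lr E].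

Lemma othE E : oth E != lr E /\ val (lA E) = [set lr E; oth E].
Proof.
have [rA _] := LE E.
have hc := valP (lA E). move: hc; rewrite /= => /eqP hc.
rewrite /oth; case: pickP => [s /andP [sA ne]|H] /=.
- split => //; apply/eqP; rewrite eq_sym eqEcard subUset !sub1set rA sA /= cards2 eq_sym ne hc //.
- exfalso.
  have h0 : #|[set x in val (lA E) | x != lr E]| = 0.
    by apply/eqP; rewrite cards_eq0; apply/eqP/setP => z; rewrite !inE H.
  have e1 := cardsD1 (lr E) (val (lA E)); rewrite rA hc in e1.
  have e2 : val (lA E) :\ lr E = [set x in val (lA E) | x != lr E].
    by apply/setP => z; rewrite !inE andbC.
  by rewrite e2 h0 in e1.
Qed.

Lemma vL_inj r A r' A' : vL r A = vL r' A' -> r = r' /\ A = A'.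
Proof.
move=> h.
have h1 : (inl r : Hvert n) \in vL r' A' by rewrite -h !inE eqxx.
have h2 : (inr A : Hvert n) \in vL r' A' by rewrite -h !inE eqxx orbT.
rewrite !inE /= in h1 h2.
split; [by case/orP: h1 => /eqP // [] | by move/eqP: h2 => []].
Qed.

Definition RR E : nat := lr E.
Definition SS E : nat := oth E.

Lemma L_inj E F : RR E = RR F -> SS E = SS F -> E = F.
Proof.
move=> /val_inj h1 /val_inj h2.
have [_ eE] := LE E; have [_ eF] := LE F.
have [_ aE] := othE E; have [_ aF] := othE F.
have hA : lA E = lA F by apply: val_inj; rewrite aE aF h1 h2.
by apply: val_inj; rewrite eE eF h1 hA.
Qed.

Lemma L_surj r s : r < n -> s < n -> r <> s -> exists E, RR E = r /\ SS E = s.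
Proof.
move=> hr hs rs.
pose r' := Ordinal hr; pose s' := Ordinal hs.
have rs' : r' != s' by apply/eqP => -[].
have cA : #|[set r'; s']| == 2 by rewrite cards2 rs'.
pose A : pair_set n := exist _ [set r'; s'] cA.
have eA : is_edge (@Hrel n) (vL r' A).
  apply/existsP; exists (inl r'); apply/existsP; exists (inr A).
  by rewrite /= !inE eqxx /=.
pose E : Lvert n := exist _ (vL r' A) eA.
exists E.
have [_ eE] := LE E.
have [h1 h2] := vL_inj _ _ _ _ (esym eE).
have [ne hA] := othE E.
split; first by rewrite /RR h1.
have : oth E \in [set r'; s'] by rewrite -[[set r'; s']]/(val A) -h2 hA !inE eqxx orbT.
rewrite !inE -h1 (negbTE ne) /= => /eqP h; by rewrite /SS h.
Qed.

Lemma set2_eq (T : finType) (r s a b : T) : r != s -> a != b ->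
  ([set r; s] == [set a; b]) = ((r == a) && (s == b)) || ((r == b) && (s == a)).
Proof.
move=> rs ab; apply/eqP/idP.
- move=> h.
  have hr : r \in [set a; b] by rewrite -h !inE eqxx.
  have hs : s \in [set a; b] by rewrite -h !inE eqxx orbT.
  have ha : a \in [set r; s] by rewrite h !inE eqxx.
  move: hr hs ha rs ab; rewrite !inE.
  by case/orP => /eqP -> ; case/orP => /eqP ->; rewrite ?eqxx //= ?orbT.
- by case/orP => /andP [/eqP -> /eqP ->] //; rewrite setUC.
Qed.

Lemma L_rel E F : Lrel E F = (g (RR E) (SS E) (RR F) (SS F) == 1).
Proof.
have eq1 : (E == F) = (RR E == RR F) && (SS E == SS F).
  apply/eqP/andP => [->|[/eqP h1 /eqP h2]]; [by rewrite !eqxx | exact: L_inj].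
have [_ eE] := LE E; have [_ eF] := LE F.
have [nE aE] := othE E; have [nF aF] := othE F.
have eq2 : (val E :&: val F != set0) = (lr E == lr F) || (lA E == lA F).
  rewrite eE eF; apply/set0Pn/idP.
  - case=> x; rewrite !inE => /andP [].
    by case/orP => /eqP ->; case/orP => /eqP //= [] ->; rewrite eqxx ?orbT.
  - case/orP => /eqP ->.
    + by exists (inl (lr F)); rewrite !inE !eqxx.
    + by exists (inr (lA F)); rewrite !inE !eqxx !orbT.
have eq3 : (lA E == lA F) = ((RR E == RR F) && (SS E == SS F)) || ((RR E == SS F) && (SS E == RR F)).
  rewrite -val_eqE aE aF set2_eq //; by rewrite eq_sym.
rewrite /Lrel /line_rel eq1 eq2 eq3.
rewrite -[lr E == lr F]/(RR E == RR F).
have := nE; have := nF; rewrite -[oth E != lr E]/(SS E != RR E) -[oth F != lr F]/(SS F != RR F).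
rewrite /g; case: (RR E =P RR F); case: (SS E =P SS F); case: (RR E =P SS F); case: (SS E =P RR F) => //=; lia.
Qed.

End Spec.

Lemma L_RS n (x : Lvert n) : @RR n x <> @SS n x.
Proof. have [ne _] := @othE n x; move=> h; move: ne; rewrite /RR /SS in h; by rewrite (val_inj h) eqxx. Qed.

Theorem theorem3p8 (n : nat) : 5 <= n -> metric_dim (@Lrel n) = n - 2.
Proof.
move=> hn.
exact: (@metric_dim_gen _ (@Lrel n) (@RR n) (@SS n) n hn (fun x => ltn_ord _) (fun x => ltn_ord _)
  (@L_RS n) (@L_surj n) (@L_inj n) (@L_rel n)).
Qed.
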